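(* Let $p>2$ be a prime and $\alpha\ge 3$ an integer, and let $n=p^\alpha$. Then the independent domination polynomial $D_i(\Gamma(\mathbb{Z}_n),x)$ is log-concave but not unimodal.
   Context: For an integer $n\ge 2$, the zero divisor graph $\Gamma(\mathbb{Z}_n)$ is the simple graph whose vertices are the nonzero zero divisors of $\mathbb{Z}_n$, with distinct vertices $a,b$ adjacent if and only if $ab\equiv 0\pmod n$. An independent dominating set of a graph $G$ is a set of pairwise non-adjacent vertices such that every vertex outside the set is adjacent to some vertex in it. If $d_i(G,k)$ denotes the number of independent dominating sets of $G$ of cardinality $k$, the independent domination polynomial is $D_i(G,x)=\sum_{k} d_i(G,k)x^k$. For a polynomial $\sum_{i=0}^b a_i x^i$ of degree $b$ (with $a_i=0$ for absent powers): it is unimodal if there is an index $0\le t\le b$ with $a_0\le a_1\le\dots\le a_t\ge a_{t+1}\ge\dots\ge a_b$; it is log-concave if $a_j^2\ge a_{j-1}a_{j+1}$ for all $1\le j\le b-1$. *)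

(* Defs.v *)
From mathcomp Require Import all_boot all_order all_algebra.
Set Implicit Arguments. Unset Strict Implicit. Unset Printing Implicit Defensive.
Import GRing.Theory Num.Theory.

(* Z_n is represented by 'I_n (residues 0..n-1), multiplication mod n. *)

Definition zdiv_vertex (n : nat) (a : 'I_n) : bool :=
  (val a != 0) && [exists b : 'I_n, (val b != 0) && ((val a * val b) %% n == 0)].

Definition zdg_vertices (n : nat) : {set 'I_n} := [set a | zdiv_vertex a].

Definition zdg_adj (n : nat) (a b : 'I_n) : bool :=
  [&& zdiv_vertex a, zdiv_vertex b, a != b & (val a * val b) %% n == 0].

Definition zdg_indep_dom (n : nat) (S : {set 'I_n}) : bool :=
  [&& S \subset zdg_vertices n,
      [forall x in S, forall y in S, ~~ zdg_adj x y] &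
      [forall v in zdg_vertices n :\: S, exists u in S, zdg_adj u v]].

Definition d_i (n k : nat) : nat :=
  #|[set S : {set 'I_n} | zdg_indep_dom S & #|S| == k]|.

(* independent domination polynomial D_i(Gamma(Z_n), x); all independent
   dominating sets have size <= n, so k ranges over 0..n *)
Definition Di_poly (n : nat) : {poly int} :=
  (\poly_(k < n.+1) ((d_i n k)%:R : int))%R.

Local Open Scope ring_scope.

Definition unimodal (q : {poly int}) : Prop :=
  exists2 t : nat, (t <= (size q).-1)%N &
    (forall i : nat, (i < t)%N -> q`_i <= q`_i.+1) /\
    (forall i : nat, (t <= i)%N -> (i < (size q).-1)%N -> q`_i.+1 <= q`_i).

Definition log_concave (q : {poly int}) : Prop :=
  forall j : nat, (1 <= j)%N -> (j <= (size q).-1.-1)%N ->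
    q`_j.-1 * q`_j.+1 <= q`_j ^+ 2.

(* Main.v *)
Require Import Defs.
From mathcomp Require Import all_boot all_order all_algebra zify.
Set Implicit Arguments. Unset Strict Implicit. Unset Printing Implicit Defensive.
Import GRing.Theory Num.Theory.

Lemma vertexE p al (a : 'I_(p ^ al)) : prime p -> 0 < al ->
  zdiv_vertex a = (0 < a) && (p %| a).
Proof.
move=> pp al0; have p1 := prime_gt1 pp; have p0 := prime_gt0 pp.
have lt : p ^ al.-1 < p ^ al by rewrite ltn_exp2l //; lia.
rewrite /zdiv_vertex lt0n; case: (val a =P 0) => //= a0.
apply/existsP/idP.
  case=> b /andP[b0 ab]; apply/negPn/negP => npa.
  have cop : coprime (p ^ al) a by rewrite coprime_pexpl // prime_coprime.
  have : p ^ al %| b by rewrite -(Gauss_dvdr _ cop).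
  move/(dvdn_leq); rewrite lt0n b0 => /(_ isT); rewrite leqNgt ltn_ord //.
move=> pa; exists (Ordinal lt) => /=; rewrite -lt0n expn_gt0 p0 /=.
have e : p ^ al = p * p ^ al.-1 by rewrite -expnS; congr (_ ^ _); lia.
by apply/dvdnP; case/dvdnP: pa => k ->; exists k; rewrite e mulnA.
Qed.

Lemma adjE p al (a b : 'I_(p ^ al)) : prime p -> 0 < al ->
  zdiv_vertex a -> zdiv_vertex b ->
  zdg_adj a b = (a != b) && (al <= logn p a + logn p b).
Proof.
move=> pp al0 va vb; rewrite /zdg_adj va vb /=.
move: (va) (vb); rewrite !vertexE // => /andP[a0 _] /andP[b0 _].
congr (_ && _); rewrite -lognM // -pfactor_dvdn // ?muln_gt0 ?a0 //.
Qed.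

Lemma vert_logn p al (a : 'I_(p ^ al)) : prime p -> 0 < al ->
  zdiv_vertex a -> 0 < logn p a < al.
Proof.
move=> pp al0; rewrite vertexE // => /andP[a0 pa].
have p0 := prime_gt0 pp.
apply/andP; split.
  by rewrite -(pfactor_dvdn 1 pp a0) expn1.
rewrite ltnNge -(pfactor_dvdn _ pp a0); apply/negP => /(dvdn_leq a0).
by rewrite leqNgt ltn_ord.
Qed.

Lemma card_mult (N d : nat) : 0 < d -> d %| N ->
  #|[set a : 'I_N | d %| a]| = N %/ d.
Proof.
move=> d0 dN.
rewrite cardsE -sum1_card big_mkcond /= divn_count_dvd.
rewrite -(big_mkord xpredT (fun i => if d %| i then 1 else 0)).
case: N dN => [|N] dN; first by rewrite !big_geq.
rewrite [in LHS]big_ltn // [in RHS]big_nat_recr //= dN dvdn0 /= addnC.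
congr (_ + _); apply: eq_bigr => i _; by case: (d %| i).
Qed.

Lemma card_low p al k : prime p -> 0 < al -> 0 < k <= al ->
  #|[set w : 'I_(p ^ al) | zdiv_vertex w & logn p w < k]| =
  p ^ al.-1 - p ^ (al - k).
Proof.
move=> pp al0 /andP[k0 kal]; have p0 := prime_gt0 pp.
have -> : [set w : 'I_(p ^ al) | zdiv_vertex w & logn p w < k] =
   [set w : 'I_(p ^ al) | p %| w] :\: [set w : 'I_(p ^ al) | p ^ k %| w].
  apply/setP => w; rewrite !inE vertexE //.
  case: (posnP w) => [->|w0] /=; first by rewrite !dvdn0.
  by rewrite (pfactor_dvdn _ pp w0) -ltnNge andbC.
rewrite cardsD.
have -> : [set w : 'I_(p ^ al) | p %| w] :&: [set w : 'I_(p ^ al) | p ^ k %| w]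
   = [set w : 'I_(p ^ al) | p ^ k %| w].
  apply/setP => w; rewrite !inE; case h: (p ^ k %| w); rewrite ?andbF // andbT.
  apply: dvdn_trans h; rewrite -{1}(expn1 p). exact: (dvdn_exp2l p k0).
have d1 : p %| p ^ al by rewrite -{1}(expn1 p); exact: (dvdn_exp2l p al0).
have d2 : p ^ k %| p ^ al by exact: (dvdn_exp2l p kal).
rewrite (card_mult p0 d1) (card_mult _ d2) ?expn_gt0 ?p0 //.
have -> : p ^ al %/ p = p ^ al.-1.
  by rewrite -[X in _ %/ X](expn1 p) -(expnB p0 al0) subn1.
by rewrite -(expnB p0 kal).
Qed.

Definition inD p al s :=
  (exists2 e, (al./2 <= e <= al.-1) & s = 1 + (p ^ al.-1 - p ^ e)) \/
  s = p ^ al.-1 - p ^ (al./2).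

Lemma half_bounds n : n./2 + n./2 <= n <= n./2 + n./2 + 1.
Proof. by move: (odd_double_half n); rewrite -addnn; case: (odd n) => /= <-; lia. Qed.

Lemma size_inD p al (S : {set 'I_(p ^ al)}) : prime p -> 3 <= al ->
  zdg_indep_dom S -> inD p al #|S|.
Proof.
move=> pp al3 /and3P[Sv /forallP Sind /forallP Sdom].
have al0 : 0 < al by lia.
have hb := half_bounds al.
have vert : forall x, x \in S -> zdiv_vertex x.
  by move=> x /(subsetP Sv); rewrite inE.
have ind : forall x y, x \in S -> y \in S -> ~~ zdg_adj x y.
  by move=> x y xS yS; move: (Sind x); rewrite xS /= => /forallP /(_ y); rewrite yS.
have dom : forall w, zdiv_vertex w -> w \notin S -> exists2 u, u \in S & zdg_adj u w.
  move=> w vw wS; move: (Sdom w); rewrite !inE wS vw /= => /existsP [u /andP[uS a]].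
  by exists u.
case: (boolP [exists u in S, al <= 2 * logn p u]) => [/existsP[u /andP[uS hu]]| /existsPn nh].
  set L := [set w : 'I_(p ^ al) | zdiv_vertex w & logn p w < al - logn p u].
  have vu := vert_logn pp al0 (vert u uS).
  have Sx : forall x, x \in S -> x != u -> x \in L.
    move=> x xS xu; rewrite inE vert //=; have := ind u x uS xS.
    by rewrite adjE // ?vert // eq_sym xu /= -ltnNge; lia.
  have eqS : S = u |: L.
    apply/setP => w; rewrite in_setU1; case: (eqVneq w u) => [->|wu] /=; first by rewrite uS.
    apply/idP/idP; first by move=> wS; exact: Sx wS wu.
    rewrite inE => /andP[vw lw]; apply/negPn/negP => wS.
    have [y yS] := dom w vw wS.
    rewrite (adjE pp al0 (vert y yS) vw) => /andP[_].
    case: (eqVneq y u) => [->|yu]; first by lia.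
    by have := Sx y yS yu; rewrite inE => /andP[_ ly]; lia.
  have uL : u \notin L by rewrite inE negb_and; apply/orP; right; lia.
  rewrite eqS cardsU1 uL card_low //; last by lia.
  left; exists (logn p u); first by lia.
  by congr (_ + (_ - p ^ _)); lia.
set L := [set w : 'I_(p ^ al) | zdiv_vertex w & logn p w < al - al./2].
have low : forall x, x \in S -> logn p x < al - al./2.
  move=> x xS; move: (nh x); rewrite xS /= -ltnNge; lia.
have eqS : S = L.
  apply/setP => w; rewrite inE; apply/idP/idP.
    by move=> wS; rewrite vert // low.
  move=> /andP[vw lw]; apply/negPn/negP => wS.
  have [y yS] := dom w vw wS.
  rewrite (adjE pp al0 (vert y yS) vw) => /andP[_].
  by have := low y yS; lia.
rewrite eqS card_low //; last by lia.
by right; congr (_ - p ^ _); lia.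
Qed.

Lemma pow_facts p al e : prime p -> 2 < p -> 3 <= al -> al./2 <= e <= al.-1 ->
  [/\ p ^ e <= p ^ al.-1, p %| p ^ e, p %| p ^ al.-1 &
      (e = al./2 \/ 3 * p ^ (al./2) <= p ^ e)].
Proof.
move=> pp p2 al3 /andP[h1 h2]; have p0 := prime_gt0 pp.
have hb := half_bounds al.
split.
- exact: leq_pexp2l.
- rewrite -{1}(expn1 p); apply: dvdn_exp2l; lia.
- rewrite -{1}(expn1 p); apply: dvdn_exp2l; lia.
case: (eqVneq e al./2) => [->|ne]; first by left.
right; apply: (@leq_trans (p ^ (al./2).+1)); last by apply: leq_pexp2l => //; lia.
by rewrite expnS leq_mul2r; apply/orP; right.
Qed.

Lemma C_facts p al : prime p -> 2 < p -> 3 <= al ->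
  [/\ p ^ (al./2) <= p ^ al.-1, p %| p ^ (al./2), p <= p ^ (al./2) & p %| p ^ al.-1].
Proof.
move=> pp p2 al3; have p0 := prime_gt0 pp; have hb := half_bounds al.
split.
- apply: leq_pexp2l => //; lia.
- rewrite -{1}(expn1 p); apply: dvdn_exp2l; lia.
- rewrite -{1}(expn1 p); apply: leq_pexp2l => //; lia.
- rewrite -{1}(expn1 p); apply: dvdn_exp2l; lia.
Qed.

Lemma no_p2 p x : 2 < p -> p %| x -> p %| x + 2 -> False.
Proof.
move=> p2 d1; rewrite dvdn_addr // => /dvdn_leq; move=> /(_ isT); lia.
Qed.

Lemma inD_no2 p al s : prime p -> 2 < p -> 3 <= al ->
  inD p al s -> inD p al s.+2 -> False.
Proof.
move=> pp p2 al3 h1 h2.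
have [c1 c2 c3 c4] := C_facts pp p2 al3.
move: h2; case: h1 => [[e he ->]|->]; case => [[f hf E]|E].
- have [a1 a2 a3 a4] := pow_facts pp p2 al3 he.
  have [b1 b2 b3 b4] := pow_facts pp p2 al3 hf.
  have ef : p ^ e = p ^ f + 2 by lia.
  by apply: (no_p2 p2 b2); rewrite -ef.
- have [a1 a2 a3 [a4|a4]] := pow_facts pp p2 al3 he.
    by move: E; rewrite a4; lia.
  by lia.
- have [b1 b2 b3 [b4|b4]] := pow_facts pp p2 al3 hf.
    by move: E; rewrite b4; lia.
  by lia.
- by lia.
Qed.

Lemma inD_ne2 p al : prime p -> 2 < p -> 3 <= al -> ~ inD p al 2.
Proof.
move=> pp p2 al3 h.
have [c1 c2 c3 c4] := C_facts pp p2 al3.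
case: h => [[e he E]|E].
- have [a1 a2 a3 a4] := pow_facts pp p2 al3 he.
  have ef : p ^ al.-1 = p ^ e + 1 by lia.
  move: a3; rewrite ef dvdn_addr // => /dvdn_leq; move=> /(_ isT); have := prime_gt1 pp; lia.
- have ef : p ^ al.-1 = p ^ (al./2) + 2 by lia.
  by apply: (no_p2 p2 c2); rewrite -ef.
Qed.

Lemma coefDi n k : ((Di_poly n)`_k = (d_i n k)%:R :> int)%R.
Proof.
rewrite /Di_poly coef_poly; case: ltnP => // hk.
suff -> : d_i n k = 0 by [].
apply/eqP; rewrite cards_eq0; apply/eqP/setP => S; rewrite !inE.
have := max_card S; rewrite card_ord => hS.
by apply/negP => /andP[_ /eqP e]; move: hS; rewrite e; lia.
Qed.

Lemma di_ex n k : 0 < d_i n k -> exists S : {set 'I_n}, zdg_indep_dom S /\ #|S| = k.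
Proof. by case/card_gt0P => S; rewrite inE => /andP[h /eqP e]; exists S. Qed.

Lemma di_gt0 n (S : {set 'I_n}) : zdg_indep_dom S -> 0 < d_i n #|S|.
Proof. by move=> h; apply/card_gt0P; exists S; rewrite inE h eqxx. Qed.

Lemma adj_sym n (a b : 'I_n) : zdg_adj a b = zdg_adj b a.
Proof.
by rewrite /zdg_adj eq_sym mulnC; case: (zdiv_vertex a); case: (zdiv_vertex b).
Qed.

Lemma single_ok p al : prime p -> 3 <= al ->
  exists S : {set 'I_(p ^ al)}, zdg_indep_dom S /\ #|S| = 1.
Proof.
move=> pp al3; have p1 := prime_gt1 pp; have p0 := prime_gt0 pp; have al0 : 0 < al by lia.
have lt : p ^ al.-1 < p ^ al by rewrite ltn_exp2l //; lia.
set u := Ordinal lt.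
have vu : zdiv_vertex u.
  rewrite vertexE //= expn_gt0 p0 /= -{1}(expn1 p); apply: dvdn_exp2l; lia.
exists [set u]; split; last by rewrite cards1.
apply/and3P; split.
- by rewrite sub1set inE.
- apply/forallP => x; apply/implyP; rewrite inE => /eqP ->.
  apply/forallP => y; apply/implyP; rewrite inE => /eqP ->.
  by rewrite /zdg_adj eqxx !andbF.
- apply/forallP => w; apply/implyP; rewrite !inE => /andP[wu vw].
  apply/existsP; exists u; rewrite inE eqxx /= adjE // eq_sym wu /=.
  have := vert_logn pp al0 vw; rewrite pfactorK //; lia.
Qed.

Definition indepP n (S : {set 'I_n}) :=
  (S \subset zdg_vertices n) && [forall x in S, forall y in S, ~~ zdg_adj x y].

Lemma big_ok p al : prime p -> 2 < p -> 3 <= al ->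
  exists S : {set 'I_(p ^ al)}, zdg_indep_dom S /\ 2 <= #|S|.
Proof.
move=> pp p2 al3; have p1 := prime_gt1 pp; have p0 := prime_gt0 pp; have al0 : 0 < al by lia.
have p3 : p ^ 3 <= p ^ al by apply: leq_pexp2l.
have lt1 : p < p ^ al by apply: (@leq_trans (p ^ 3)) => //; rewrite !expnS expn0; nia.
have lt2 : 2 * p < p ^ al by apply: (@leq_trans (p ^ 3)) => //; rewrite !expnS expn0; nia.
set a1 := Ordinal lt1; set a2 := Ordinal lt2.
have v1 : zdiv_vertex a1 by rewrite vertexE //= p0 dvdnn.
have v2 : zdiv_vertex a2 by rewrite vertexE //= muln_gt0 p0 dvdn_mull.
have l1 : logn p a1 = 1 by rewrite /= -[X in logn _ X](expn1 p) pfactorK.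
have l2 : logn p a2 = 1.
  by rewrite /= lognM // (ltn_log0 p2) -[X in logn _ X](expn1 p) pfactorK.
have a12 : a1 != a2 by apply/eqP => /(congr1 val) /=; lia.
have PC : indepP [set a1; a2].
  apply/andP; split.
    by apply/subsetP => x; rewrite !inE => /orP[] /eqP ->.
  apply/forallP => x; apply/implyP; rewrite !inE => hx.
  apply/forallP => y; apply/implyP; rewrite !inE => hy.
  have [vx lx] : zdiv_vertex x /\ logn p x = 1 by case/orP: hx => /eqP ->.
  have [vy ly] : zdiv_vertex y /\ logn p y = 1 by case/orP: hy => /eqP ->.
  rewrite adjE // lx ly negb_and; apply/orP; right; lia.
have [M /maxsetP [PM maxM] CM] := maxset_exists PC.
exists M; split; last first.
  by move: (subset_leq_card CM); rewrite cards2 a12.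
case/andP: PM => Mv Mind; apply/and3P; split => //.
apply/forallP => w; apply/implyP; rewrite !inE => /andP[wM vw].
case: (boolP [exists u in M, zdg_adj u w]) => // /existsPn H.
have PM' : indepP (w |: M).
  apply/andP; split.
    by rewrite subUset sub1set inE vw Mv.
  apply/forallP => x; apply/implyP; rewrite !inE => hx.
  apply/forallP => y; apply/implyP; rewrite !inE => hy.
  case/orP: hx => [/eqP ->|xM]; case/orP: hy => [/eqP ->|yM].
  - by rewrite /zdg_adj eqxx !andbF.
  - by have := H y; rewrite yM /= adj_sym.
  - by have := H x; rewrite xM.
  - by move: Mind => /forallP /(_ x); rewrite xM => /forallP /(_ y); rewrite yM.
have := maxM _ PM' (subsetUr _ _) => /setP /(_ w).
by rewrite !inE eqxx (negbTE wM).
Qed.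

Theorem mainTheorem6 (p alpha : nat) :
  prime p -> (2 < p)%N -> (3 <= alpha)%N ->
  log_concave (Di_poly (p ^ alpha)) /\ ~ unimodal (Di_poly (p ^ alpha)).
Proof.
move=> pp p2 al3.
have d2 : d_i (p ^ alpha) 2 = 0.
  case: (posnP (d_i (p ^ alpha) 2)) => // /di_ex [S [hS e]].
  by case: (inD_ne2 pp p2 al3); rewrite -e; apply: size_inD.
split.
  move=> j j1 _; rewrite !coefDi.
  case: (posnP (d_i (p ^ alpha) j.-1)) => [->|h1]; first by rewrite mul0r sqr_ge0.
  case: (posnP (d_i (p ^ alpha) j.+1)) => [->|h2]; first by rewrite mulr0 sqr_ge0.
  exfalso.
  have [S1 [hS1 e1]] := di_ex h1; have [S2 [hS2 e2]] := di_ex h2.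
  apply: (inD_no2 pp p2 al3 (size_inD pp al3 hS1)).
  have -> : #|S1|.+2 = #|S2| by rewrite e1 e2; lia.
  exact: size_inD.
have [S1 [hS1 e1]] := single_ok pp al3.
have h1 := di_gt0 hS1; rewrite e1 in h1.
have [M [hM M2]] := big_ok pp p2 al3.
have hK := di_gt0 hM.
have K3 : 3 <= #|M|.
  have := size_inD pp al3 hM; case: (ltngtP #|M| 2) => // [|e]; first by lia.
  by rewrite e => /(inD_ne2 pp p2 al3).
set K := #|M| in hK K3.
set q := Di_poly (p ^ alpha).
move=> [t tle [inc dec]].
have Ks : K <= (size q).-1.
  case: (leqP (size q) K) => [hs|hs]; last by lia.
  have : ((d_i (p ^ alpha) K)%:R = 0 :> int)%R by rewrite -coefDi nth_default.
  by move/eqP; rewrite pnatr_eq0 => /eqP e0; rewrite e0 in hK.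
have q2 : (q`_2 = 0)%R by rewrite coefDi d2.
have cq : forall k, (q`_k = (d_i (p ^ alpha) k)%:R :> int)%R := coefDi (p ^ alpha).
clearbody q K.
case: (leqP t 2) => ht.
  have chain : forall i, 2 <= i <= K -> (q`_i <= q`_2)%R.
    elim=> [|i IH] /andP[hi hiK]; first by [].
    case: (ltngtP i.+1 2) => [|//|->]; [lia| |by []].
    move=> hi2; apply: (Order.POrderTheory.le_trans (dec i _ _)); first by lia.
      exact: (leq_trans hiK Ks).
    by apply: IH; lia.
  have := chain K; rewrite q2 cq leqnn andbT (ltnW K3) => /(_ isT); rewrite natz lez_nat; lia.
have := inc 1 (ltnW ht); rewrite q2 !cq natz lez_nat; lia.
Qed.
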